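(* Let $f:X\to X$, $X=[c_0,c_N]$, satisfy properties P1–P6 (with slope $\lambda\in(0,1)$), let $\{\xi_r\}_{r\in\mathbb{N}}$ be a well-cutting orbit of $f$, and define $\phi:[c_0,c_N]\to\mathbb{R}$ by $\phi(x)=x+\sum_{n\in\mathcal{N}(x)}\lambda^n$, where $\mathcal{N}(x):=\{n\geqslant1:\xi_n<x\}$. Then $\phi$ is strictly increasing, left-continuous on $[c_0,c_N]$, continuous on $[c_0,c_N]\setminus\{\xi_r\}_{r\geqslant1}$, and $\lim_{x\searrow\xi_r}\phi(x)=\phi(\xi_r)+\lambda^r$ for all $r\geqslant 1$. Moreover, \[ \phi([c_0,c_N])=[\phi(c_0),\phi(c_N)]\setminus\bigcup_{r=1}^\infty G_r,\qquad G_r:=(\phi(\xi_r),\phi(\xi_r)+\lambda^r]\ (r\geqslant 1), \] and $\overline{G_r}\cap\overline{G_l}=\emptyset$ for all $r\neq l$.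
   Context: Setting: $N\geqslant 2$, $c_0<c_1<\dots<c_N$, $X=[c_0,c_N]$, $X_1=[c_0,c_1)$, $X_i=(c_{i-1},c_i)$ for $1<i<N$, $X_N=(c_{N-1},c_N]$; $\Delta:=\{c_1,\dots,c_{N-1}\}$; $f_i$ is the continuous extension of $f|_{X_i}$ to $\overline{X_i}$; $\widetilde X:=\bigcap_{n\geqslant0}f^{-n}(X\setminus\Delta)$. Atoms: $F_i(A):=\overline{f(A\cap X_i)}$, $A_{i_1\dots i_n}:=F_{i_n}\circ\dots\circ F_{i_1}(X)$ is an atom of generation $n$ if non-empty, $\mathcal{A}_n$ their set, $\mathcal{A}_n(x):=\{A\in\mathcal{A}_n:\exists t\in\mathbb{N},f^{t+n}(x)\in A\}$; attractor $\Lambda:=\bigcap_{n\geqslant1}\bigcup_{A\in\mathcal{A}_n}A$. $\Delta_{lr}(x)$ is the set of $c_i\in\Delta$ such that for every $n\geqslant1$ there is $A\in\mathcal{A}_n(x)$ with $c_i\in A$, $f^{t+n}(x)\in A\cap X_i$ and $f^{t'+n}(x)\in A\cap X_{i+1}$ for some $t,t'\in\mathbb{N}$. P1: $f$ is discontinuous at every point of $\Delta$, and $f|_{X_i}$ is affine with slope $\lambda\in(0,1)$ for every $i$. P2 (separation): each $f_i$ injective and $f_i(\overline{X_i})\cap f_j(\overline{X_j})=\emptyset$ for $i\neq j$. P3: $\Lambda$ is a Cantor set. P4: $\bigcup_{i=1}^{N-1}\{f_i(c_i),f_{i+1}(c_i)\}\subset\widetilde X$. P5: for some $i$, $\{f^n(f_i(c_i))\}_n$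 or $\{f^n(f_{i+1}(c_i))\}_n$ is dense in $\Lambda$. P6: $c_i\in\Delta_{lr}(x)$ for all $x\in\widetilde X$ and all $i\in\{1,\dots,N-1\}$. A well-cutting orbit of $f$ is an orbit $\{\xi_r\}_{r\in\mathbb{N}}$, $\xi_r=f^r(\xi_0)$, with $\xi_0\in\Lambda\cap\widetilde X$, containing no point of: (1) the boundary points of the gaps of the Cantor set $\Lambda$; (2) the forward orbits of $c_0$ and $c_N$; (3) the forward orbits of $f_i(c_i)$ and $f_{i+1}(c_i)$ for $i\in\{1,\dots,N-1\}$. *)

(* Defs.v *)
From Stdlib Require Import Reals Lra List.
From Coquelicot Require Import Coquelicot.
Open Scope R_scope.

Fixpoint fiter (n : nat) (f : R -> R) (x : R) : R :=
  match n with O => x | S m => f (fiter m f x) end.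

Definition cl (A : R -> Prop) (x : R) : Prop :=
  forall eps, 0 < eps -> exists y, A y /\ Rabs (y - x) < eps.

Definition inX (c : nat -> R) (N : nat) (x : R) : Prop := c 0%nat <= x <= c N.

(* X_1 = [c0,c1), X_i = (c_{i-1},c_i) (1<i<N), X_N = (c_{N-1},c_N] *)
Definition inXi (c : nat -> R) (N i : nat) (x : R) : Prop :=
  (if Nat.eqb i 1 then c 0%nat <= x else c (i - 1)%nat < x) /\
  (if Nat.eqb i N then x <= c N else x < c i).

Definition inDelta (c : nat -> R) (N : nat) (x : R) : Prop :=
  exists i, (1 <= i <= N - 1)%nat /\ x = c i.

(* f_i : continuous extension of f|X_i to closure(X_i) = [c_{i-1}, c_i].
   Under P1 (f affine with slope lam on X_i) it is the affine map below,
   written through the midpoint m_i of X_i. *)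
Definition fext (c : nat -> R) (f : R -> R) (lam : R) (i : nat) (x : R) : R :=
  let m := (c (i - 1)%nat + c i) / 2 in f m + lam * (x - m).

Definition Fset (c : nat -> R) (N : nat) (f : R -> R) (i : nat) (A : R -> Prop)
  : R -> Prop :=
  cl (fun y => exists x, A x /\ inXi c N i x /\ y = f x).

(* A_{i1...in} = F_{in} o ... o F_{i1} (X), word w = [i1; ...; in] *)
Definition atom (c : nat -> R) (N : nat) (f : R -> R) (w : list nat) : R -> Prop :=
  List.fold_left (fun (A : R -> Prop) (i : nat) => Fset c N f i A) w (inX c N).

Definition valid_word (N : nat) (w : list nat) : Prop :=
  List.Forall (fun i => (1 <= i <= N)%nat) w.

Definition Lam (c : nat -> R) (N : nat) (f : R -> R) (x : R) : Prop :=
  forall n, (1 <= n)%nat ->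
    exists w, length w = n /\ valid_word N w /\ atom c N f w x.

Definition Xt (c : nat -> R) (N : nat) (f : R -> R) (x : R) : Prop :=
  forall n, inX c N (fiter n f x) /\ ~ inDelta c N (fiter n f x).

Definition Dlr (c : nat -> R) (N : nat) (f : R -> R) (x : R) (i : nat) : Prop :=
  forall n, (1 <= n)%nat ->
    exists w, length w = n /\ valid_word N w /\ atom c N f w (c i) /\
      (exists t, atom c N f w (fiter (t + n) f x) /\ inXi c N i (fiter (t + n) f x)) /\
      (exists t', atom c N f w (fiter (t' + n) f x) /\
                  inXi c N (i + 1) (fiter (t' + n) f x)).

Definition is_cantor (S : R -> Prop) : Prop :=
  (exists x, S x) /\
  (forall x, cl S x -> S x) /\
  (exists M, forall x, S x -> Rabs x <= M) /\
  (forall x, S x -> forall eps, 0 < eps ->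
      exists y, S y /\ y <> x /\ Rabs (y - x) < eps) /\
  (forall a b, a < b -> ~ (forall y, a <= y <= b -> S y)).

Definition gap_endpoint (S : R -> Prop) (x : R) : Prop :=
  exists a b, a < b /\ S a /\ S b /\ (forall y, a < y < b -> ~ S y) /\
              (x = a \/ x = b).

Definition P1 (c : nat -> R) (N : nat) (f : R -> R) (lam : R) : Prop :=
  (forall i, (1 <= i <= N - 1)%nat -> ~ continuity_pt f (c i)) /\
  (0 < lam < 1) /\
  (forall i, (1 <= i <= N)%nat ->
     exists b, forall x, inXi c N i x -> f x = lam * x + b).

Definition P2 (c : nat -> R) (N : nat) (f : R -> R) (lam : R) : Prop :=
  (forall i, (1 <= i <= N)%nat -> forall x y,
     c (i - 1)%nat <= x <= c i -> c (i - 1)%nat <= y <= c i ->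
     fext c f lam i x = fext c f lam i y -> x = y) /\
  (forall i j, (1 <= i <= N)%nat -> (1 <= j <= N)%nat -> i <> j ->
     forall x y, c (i - 1)%nat <= x <= c i -> c (j - 1)%nat <= y <= c j ->
     fext c f lam i x <> fext c f lam j y).

Definition P3 (c : nat -> R) (N : nat) (f : R -> R) : Prop := is_cantor (Lam c N f).

Definition P4 (c : nat -> R) (N : nat) (f : R -> R) (lam : R) : Prop :=
  forall i, (1 <= i <= N - 1)%nat ->
    Xt c N f (fext c f lam i (c i)) /\ Xt c N f (fext c f lam (i + 1) (c i)).

Definition dense_orbit_in (f : R -> R) (z : R) (S : R -> Prop) : Prop :=
  forall y, S y -> forall eps, 0 < eps -> exists n, Rabs (fiter n f z - y) < eps.

Definition P5 (c : nat -> R) (N : nat) (f : R -> R) (lam : R) : Prop :=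
  exists i, (1 <= i <= N - 1)%nat /\
    (dense_orbit_in f (fext c f lam i (c i)) (Lam c N f) \/
     dense_orbit_in f (fext c f lam (i + 1) (c i)) (Lam c N f)).

Definition P6 (c : nat -> R) (N : nat) (f : R -> R) : Prop :=
  forall x, Xt c N f x -> forall i, (1 <= i <= N - 1)%nat -> Dlr c N f x i.

Definition well_cutting (c : nat -> R) (N : nat) (f : R -> R) (lam : R)
  (xi : nat -> R) : Prop :=
  (forall r, xi r = fiter r f (xi 0%nat)) /\
  Lam c N f (xi 0%nat) /\ Xt c N f (xi 0%nat) /\
  (forall r, ~ gap_endpoint (Lam c N f) (xi r)) /\
  (forall r m, xi r <> fiter m f (c 0%nat) /\ xi r <> fiter m f (c N)) /\
  (forall r m i, (1 <= i <= N - 1)%nat ->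
     xi r <> fiter m f (fext c f lam i (c i)) /\
     xi r <> fiter m f (fext c f lam (i + 1) (c i))).

Definition phi (lam : R) (xi : nat -> R) (x : R) : R :=
  x + Series (fun n => match n with
                       | O => 0
                       | S _ => if Rlt_dec (xi n) x then lam ^ n else 0
                       end).

Definition Gr (lam : R) (xi : nat -> R) (r : nat) (y : R) : Prop :=
  phi lam xi (xi r) < y <= phi lam xi (xi r) + lam ^ r.

(* Main.v *)
Require Import Defs.
From Stdlib Require Import Reals Lra List Lia Classical_Prop.
From Coquelicot Require Import Coquelicot.
Open Scope R_scope.

Definition tm (lam : R) (xi : nat -> R) (x : R) (n : nat) : R :=
  match n with O => 0 | S _ => if Rlt_dec (xi n) x then lam ^ n else 0 end.

Lemma phi_eq lam xi x : phi lam xi x = x + Series (tm lam xi x).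
Proof. reflexivity. Qed.

Lemma ex_bnd lam a : 0 < lam < 1 -> (forall n, Rabs (a n) <= lam ^ n) -> ex_series a.
Proof.
  intros Hl H. apply (ex_series_le a (fun n => lam ^ n)).
  - intros n. apply H.
  - apply ex_series_geom. rewrite Rabs_right; lra.
Qed.

Lemma tm_bnd lam xi x n : 0 < lam -> 0 <= tm lam xi x n <= lam ^ n.
Proof.
  intros Hl. destruct n; simpl.
  - split; [lra|]. lra.
  - pose proof (pow_lt lam (S n) Hl). simpl in H. destruct Rlt_dec; lra.
Qed.

Lemma d_bnd lam xi x y n : 0 < lam -> x <= y ->
  0 <= tm lam xi y n - tm lam xi x n <= lam ^ n.
Proof.
  intros Hl Hxy. destruct n; simpl.
  - lra.
  - pose proof (pow_lt lam (S n) Hl). simpl in H.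
    destruct (Rlt_dec (xi (S n)) y); destruct (Rlt_dec (xi (S n)) x); lra.
Qed.

Lemma tm_ex lam xi x : 0 < lam < 1 -> ex_series (tm lam xi x).
Proof.
  intros Hl. apply (ex_bnd lam); auto. intros n.
  destruct (tm_bnd lam xi x n) as [A B]; [lra|]. rewrite Rabs_right; lra.
Qed.

Lemma d_ex lam xi x y : 0 < lam < 1 -> x <= y ->
  ex_series (fun n => tm lam xi y n - tm lam xi x n).
Proof.
  intros Hl Hxy. apply (ex_bnd lam); auto. intros n.
  destruct (d_bnd lam xi x y n) as [A B]; try lra. rewrite Rabs_right; lra.
Qed.

Lemma phi_diff lam xi x y : 0 < lam < 1 -> x <= y ->
  phi lam xi y - phi lam xi x = (y - x) + Series (fun n => tm lam xi y n - tm lam xi x n).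
Proof.
  intros Hl Hxy. rewrite !phi_eq, Series_minus by (apply tm_ex; auto). ring.
Qed.

Lemma Series_zero : Series (fun _ => 0) = 0.
Proof.
  transitivity (Series (fun n:nat => 0 * 0)).
  - apply Series_ext; intros; ring.
  - rewrite Series_scal_l; ring.
Qed.

Lemma Series_nonneg a : (forall n, 0 <= a n) -> ex_series a -> 0 <= Series a.
Proof.
  intros H E. rewrite <- Series_zero. apply Series_le; auto. intros; split; [lra|auto].
Qed.

Lemma is_series_zero : is_series (fun _ : nat => 0) 0.
Proof.
  assert (H := is_series_scal_l 0 (fun n => (/2)^n) (/ (1 - /2))
     (is_series_geom (/2) ltac:(rewrite Rabs_right; lra))).
  assert (Z : forall x : R, scal 0 x = 0) by (intros; unfold scal; simpl; unfold mult; simpl; ring).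
  rewrite Z in H.
  eapply is_series_ext; [|exact H]. intros n. simpl. apply Z.
Qed.

Lemma is_series_delta r v : is_series (fun n => if Nat.eq_dec n r then v else 0) v.
Proof.
  revert v; induction r; intros v; apply is_series_decr_1.
  - match goal with |- is_series _ ?l => replace l with 0 end.
    + eapply is_series_ext; [|apply is_series_zero].
      intros n. simpl. reflexivity.
    + unfold plus, opp; simpl. destruct (Nat.eq_dec 0 0); [|lia]. simpl. symmetry. apply Rplus_opp_r.
  - match goal with |- is_series _ ?l => replace l with v end.
    + eapply is_series_ext; [|apply (IHr v)].
      intros n. simpl. destruct (Nat.eq_dec (S n) (S r)); destruct (Nat.eq_dec n r); try lia; reflexivity.
    + unfold plus, opp; simpl. destruct (Nat.eq_dec 0 (S r)); [lia|]. simpl. rewrite Ropp_0. symmetry. apply Rplus_0_r.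
Qed.

Lemma Series_ge_term a r : (forall n, 0 <= a n) -> ex_series a -> a r <= Series a.
Proof.
  intros H E. rewrite <- (is_series_unique _ _ (is_series_delta r (a r))).
  apply Series_le; auto. intros n. destruct Nat.eq_dec; subst; split; auto; lra.
Qed.


Lemma series_tail lam a K : 0 < lam < 1 -> (forall n, 0 <= a n <= lam ^ n) ->
  (forall n, (n < K)%nat -> a n = 0) -> Series a <= lam ^ K / (1 - lam).
Proof.
  intros Hl H H0. rewrite (Series_incr_n_aux a K H0).
  apply Rle_trans with (Series (fun k => lam ^ K * lam ^ k)).
  - apply Series_le.
    + intros k; split; [apply H|]. rewrite <- pow_add. apply H.
    + apply (ex_series_scal_l (lam ^ K) (fun k => lam ^ k)).
      apply ex_series_geom. rewrite Rabs_right; lra.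
  - rewrite Series_scal_l.
    rewrite (is_series_unique (pow lam) _ (is_series_geom lam ltac:(rewrite Rabs_right; lra))).
    right. unfold Rdiv. reflexivity.
Qed.

Lemma smallK lam eps : 0 < lam < 1 -> 0 < eps -> exists K, lam ^ K / (1 - lam) < eps.
Proof.
  intros Hl He. destruct (pow_lt_1_zero lam ltac:(rewrite Rabs_right; lra) (eps * (1 - lam)))
    as [K HK].
  { apply Rmult_lt_0_compat; lra. }
  exists K. specialize (HK K (le_n _)). rewrite Rabs_right in HK.
  2: { apply Rle_ge, pow_le; lra. }
  replace eps with (eps * (1 - lam) / (1 - lam)) by (field; lra).
  unfold Rdiv. apply Rmult_lt_compat_r; [apply Rinv_0_lt_compat; lra|exact HK].
Qed.

Lemma avoid (g : nat -> R) p K : exists d, 0 < d /\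
  forall n, (n < K)%nat -> g n <> p -> d <= Rabs (g n - p).
Proof.
  induction K.
  - exists 1. split; [lra|]. intros; lia.
  - destruct IHK as [d [Hd H]]. destruct (Req_dec (g K) p) as [E|E].
    + exists d. split; auto. intros n Hn Hne. destruct (Nat.eq_dec n K); [subst; tauto|].
      apply H; auto; lia.
    + exists (Rmin d (Rabs (g K - p))). split.
      * apply Rmin_pos; auto. apply Rabs_pos_lt. lra.
      * intros n Hn Hne. destruct (Nat.eq_dec n K); [subst; apply Rmin_r|].
        eapply Rle_trans; [apply Rmin_l|]. apply H; auto; lia.
Qed.

Lemma d_cases lam xi x y n : x <= y ->
  tm lam xi y n - tm lam xi x n = 0 \/
  (n <> O /\ x <= xi n < y /\ tm lam xi y n - tm lam xi x n = lam ^ n).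
Proof.
  intros Hxy. destruct n; simpl; [left; ring|].
  destruct (Rlt_dec (xi (S n)) y); destruct (Rlt_dec (xi (S n)) x).
  - left; ring.
  - right. split; [lia|]. split; [lra|]. simpl; ring.
  - lra.
  - left; ring.
Qed.

Section G.
Variable lam : R.
Variable xi : nat -> R.
Hypothesis Hl : 0 < lam < 1.
Hypothesis Hinj : forall r l, (1 <= r)%nat -> (1 <= l)%nat -> xi r = xi l -> r = l.

Lemma L_mono_le x y : x <= y -> phi lam xi x <= phi lam xi y.
Proof.
  intros H. assert (E := phi_diff lam xi x y Hl H).
  assert (0 <= Series (fun n => tm lam xi y n - tm lam xi x n)).
  { apply Series_nonneg; [|apply d_ex; auto]. intros; apply d_bnd; lra. }
  lra.
Qed.

Lemma L_mono x y : x < y -> phi lam xi x < phi lam xi y.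
Proof.
  intros H. assert (E := phi_diff lam xi x y Hl (Rlt_le _ _ H)).
  assert (0 <= Series (fun n => tm lam xi y n - tm lam xi x n)).
  { apply Series_nonneg; [|apply d_ex; auto; lra]. intros; apply d_bnd; lra. }
  lra.
Qed.

Lemma L_jump r y : (1 <= r)%nat -> xi r < y ->
  phi lam xi (xi r) + lam ^ r + (y - xi r) <= phi lam xi y.
Proof.
  intros Hr H. assert (E := phi_diff lam xi (xi r) y Hl (Rlt_le _ _ H)).
  assert (lam ^ r <= Series (fun n => tm lam xi y n - tm lam xi (xi r) n)).
  { replace (lam ^ r) with (tm lam xi y r - tm lam xi (xi r) r).
    - apply (Series_ge_term (fun n => tm lam xi y n - tm lam xi (xi r) n)); [|apply d_ex; auto; lra]. intros; apply d_bnd; lra.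
    - destruct r; [lia|]. simpl.
      destruct (Rlt_dec (xi (S r)) y); destruct (Rlt_dec (xi (S r)) (xi (S r))); try lra.
      }
  lra.
Qed.

Lemma L_small p eps : 0 < eps -> exists d, 0 < d /\
  forall x y, x <= y -> p - d < x -> y < p + d ->
  (forall n, (1 <= n)%nat -> x <= xi n < y -> xi n = p -> False) ->
  phi lam xi y - phi lam xi x < eps.
Proof.
  intros He. destruct (smallK lam (eps/2) Hl ltac:(lra)) as [K HK].
  destruct (avoid xi p K) as [d0 [Hd0 Hav]].
  exists (Rmin d0 (eps/4)). split.
  { apply Rmin_pos; lra. }
  intros x y Hxy Hx Hy Hp.
  rewrite (phi_diff lam xi x y Hl Hxy).
  assert (Series (fun n => tm lam xi y n - tm lam xi x n) <= lam ^ K / (1 - lam)).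
  { apply series_tail; auto.
    - intros; apply d_bnd; lra.
    - intros n Hn. destruct (d_cases lam xi x y n Hxy) as [A|[B [C D]]]; auto.
      exfalso. apply (Hp n); [lia|lra|].
      destruct (Req_dec (xi n) p) as [E|E]; auto.
      specialize (Hav n Hn E). exfalso.
      assert (Rmin d0 (eps/4) <= d0) by apply Rmin_l.
      assert (Rabs (xi n - p) < d0); [|lra].
      apply Rabs_def1; lra. }
  assert (Rmin d0 (eps/4) <= eps/4) by apply Rmin_r.
  lra.
Qed.

Lemma L_right r eps : (1 <= r)%nat -> 0 < eps -> exists d, 0 < d /\
  forall y, xi r < y < xi r + d ->
  Rabs (phi lam xi y - (phi lam xi (xi r) + lam ^ r)) < eps.
Proof.
  intros Hr He. destruct (smallK lam (eps/2) Hl ltac:(lra)) as [K HK].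
  destruct (avoid xi (xi r) K) as [d0 [Hd0 Hav]].
  exists (Rmin d0 (eps/4)). split.
  { apply Rmin_pos; lra. }
  intros y Hy.
  assert (Hm1 : Rmin d0 (eps/4) <= d0) by apply Rmin_l.
  assert (Hm2 : Rmin d0 (eps/4) <= eps/4) by apply Rmin_r.
  assert (J := L_jump r y Hr (proj1 Hy)).
  assert (E0 := phi_diff lam xi (xi r) y Hl ltac:(lra)).
  set (dd := fun n => tm lam xi y n - tm lam xi (xi r) n) in E0.
  set (del := fun n => if Nat.eq_dec n r then lam ^ r else 0).
  assert (Edr : dd r = lam ^ r).
  { unfold dd. destruct r; [lia|]. simpl.
    destruct (Rlt_dec (xi (S r)) y); destruct (Rlt_dec (xi (S r)) (xi (S r))); simpl; lra. }
  assert (Hex : ex_series dd) by (apply d_ex; auto; lra).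
  assert (Hexd : ex_series del) by (eexists; apply is_series_delta).
  assert (ES : Series (fun n => dd n - del n) = Series dd - lam ^ r).
  { rewrite Series_minus; auto. f_equal. apply is_series_unique. apply is_series_delta. }
  assert (Series (fun n => dd n - del n) <= lam ^ K / (1 - lam)).
  { apply series_tail; auto.
    - intros n. unfold del. destruct (Nat.eq_dec n r).
      + subst. rewrite Edr. pose proof (pow_le lam r ltac:(lra)). lra.
      + replace (dd n - 0) with (dd n) by ring. unfold dd; apply d_bnd; lra.
    - intros n Hn. unfold del. destruct (Nat.eq_dec n r).
      + subst. rewrite Edr. ring.
      + unfold dd. destruct (d_cases lam xi (xi r) y n ltac:(lra)) as [A|[B [C D]]].
        * rewrite A; ring.
        * exfalso. assert (xi n <> xi r).
          { intros E. apply n0. apply Hinj; auto. lia. }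
          specialize (Hav n Hn H). assert (Rabs (xi n - xi r) < d0); [|lra].
          apply Rabs_def1; lra. }
  apply Rabs_def1; lra.
Qed.
End G.

Lemma cl_interval (A : R -> Prop) a b y : (forall z, A z -> a <= z <= b) -> cl A y -> a <= y <= b.
Proof.
  intros H C. split.
  - destruct (Rle_dec a y) as [|Hn]; auto. destruct (C (a - y)) as [z [Az Hz]]; [lra|].
    apply H in Az. apply Rabs_def2 in Hz. lra.
  - destruct (Rle_dec y b) as [|Hn]; auto. destruct (C (y - b)) as [z [Az Hz]]; [lra|].
    apply H in Az. apply Rabs_def2 in Hz. lra.
Qed.

Theorem phi_main (N : nat) (c : nat -> R) (lam : R) (xi : nat -> R)
  (Hl : 0 < lam < 1)
  (Hinj : forall r l, (1 <= r)%nat -> (1 <= l)%nat -> xi r = xi l -> r = l)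
  (Hab : c 0%nat <= c N) :
  (forall x y, inX c N x -> inX c N y -> x < y -> phi lam xi x < phi lam xi y) /\
  (forall x, inX c N x -> forall eps, 0 < eps -> exists delta, 0 < delta /\
     forall y, inX c N y -> x - delta < y <= x ->
       Rabs (phi lam xi y - phi lam xi x) < eps) /\
  (forall x, inX c N x -> (forall r, (1 <= r)%nat -> x <> xi r) ->
     forall eps, 0 < eps -> exists delta, 0 < delta /\
     forall y, inX c N y -> Rabs (y - x) < delta ->
       Rabs (phi lam xi y - phi lam xi x) < eps) /\
  (forall r, (1 <= r)%nat -> forall eps, 0 < eps -> exists delta, 0 < delta /\
     forall y, inX c N y -> xi r < y < xi r + delta ->
       Rabs (phi lam xi y - (phi lam xi (xi r) + lam ^ r)) < eps) /\
  (forall y, (exists x, inX c N x /\ phi lam xi x = y) <->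
     (phi lam xi (c 0%nat) <= y <= phi lam xi (c N) /\
      forall r, (1 <= r)%nat -> ~ Gr lam xi r y)) /\
  (forall r l, (1 <= r)%nat -> (1 <= l)%nat -> r <> l ->
     forall y, ~ (cl (Gr lam xi r) y /\ cl (Gr lam xi l) y)).
Proof.
  assert (LC : forall x eps, 0 < eps -> exists delta, 0 < delta /\
     forall y, x - delta < y <= x -> Rabs (phi lam xi y - phi lam xi x) < eps).
  { intros x eps He. destruct (L_small lam xi Hl x eps He) as [d [Hd H]].
    exists d. split; auto. intros y Hy.
    assert (A := H y x (proj2 Hy) (proj1 Hy) ltac:(lra)
      ltac:(intros n _ B C; lra)).
    assert (B := L_mono_le lam xi Hl y x (proj2 Hy)).
    rewrite Rabs_left1 by lra. lra. }
  assert (CC : forall x, (forall r, (1 <= r)%nat -> x <> xi r) ->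
     forall eps, 0 < eps -> exists delta, 0 < delta /\
     forall y, Rabs (y - x) < delta -> Rabs (phi lam xi y - phi lam xi x) < eps).
  { intros x Hx eps He. destruct (L_small lam xi Hl x eps He) as [d [Hd H]].
    exists d. split; auto. intros y Hy. apply Rabs_def2 in Hy.
    destruct (Rle_dec y x) as [r|r].
    - assert (A := H y x r ltac:(lra) ltac:(lra) ltac:(intros n _ B C; lra)).
      assert (B := L_mono_le lam xi Hl y x r).
      rewrite Rabs_left1 by lra. lra.
    - assert (A := H x y ltac:(lra) ltac:(lra) ltac:(lra)
         ltac:(intros k Hk B0 C0; apply (Hx k Hk); auto)).
      assert (B := L_mono_le lam xi Hl x y ltac:(lra)).
      rewrite Rabs_right by lra. lra. }
  split; [|split; [|split; [|split; [|split]]]].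
  - intros x y _ _ H. apply L_mono; auto.
  - intros x _ eps He. destruct (LC x eps He) as [d [Hd H]]. exists d; split; auto.
  - intros x _ Hx eps He. destruct (CC x Hx eps He) as [d [Hd H]]. exists d; split; auto.
  - intros r Hr eps He. destruct (L_right lam xi Hl Hinj r eps Hr He) as [d [Hd H]].
    exists d; split; auto.
  - intros y. split.
    + intros [x [[Hx1 Hx2] Hxy]]. subst y. split.
      * split; apply L_mono_le; auto.
      * intros r Hr [A B]. destruct (Rle_dec x (xi r)).
        -- assert (C := L_mono_le lam xi Hl _ _ r0). lra.
        -- assert (C := L_jump lam xi Hl r x Hr ltac:(lra)). lra.
    + intros [[Hy1 Hy2] HG].
      set (E := fun x => c 0%nat <= x <= c N /\ phi lam xi x <= y).
      destruct (completeness E) as [m [Hub Hlub]].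
      { exists (c N). intros x [Hx _]. lra. }
      { exists (c 0%nat). split; auto. lra. }
      assert (Hm0 : c 0%nat <= m) by (apply Hub; split; auto; lra).
      assert (HmN : m <= c N) by (apply Hlub; intros x [Hx _]; lra).
      assert (Hpm : phi lam xi m <= y).
      { destruct (Rle_dec (phi lam xi m) y) as [|Hn]; auto. exfalso.
        destruct (LC m (phi lam xi m - y) ltac:(lra)) as [d [Hd H]].
        destruct (Classical_Prop.classic (exists s, E s /\ m - d < s)) as [[s [Es Hs]]|Hno].
        - assert (s <= m) by (apply Hub; auto).
          specialize (H s ltac:(lra)). apply Rabs_def2 in H. destruct Es. lra.
        - assert (m <= m - d); [|lra]. apply Hlub. intros x Ex.
          destruct (Rle_dec x (m - d)); auto. exfalso. apply Hno. exists x. split; auto; lra. }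
      destruct (Req_dec (phi lam xi m) y) as [Eq|Ne].
      { exists m. split; [split|]; auto. }
      exfalso.
      assert (HmN' : m < c N).
      { destruct (Req_dec m (c N)); [subst m; lra|lra]. }
      assert (Hz : forall z, m < z <= c N -> y < phi lam xi z).
      { intros z Hz. destruct (Rlt_le_dec y (phi lam xi z)); auto.
        assert (z <= m) by (apply Hub; split; auto; lra). lra. }
      destruct (Classical_Prop.classic (exists r, (1 <= r)%nat /\ m = xi r)) as [[r [Hr Emr]]|Hno].
      * subst m. assert (NG : ~ Gr lam xi r y) by (apply HG; auto).
        unfold Gr in NG.
        assert (Hy' : phi lam xi (xi r) + lam ^ r < y) by (destruct (Rle_dec y (phi lam xi (xi r) + lam ^ r)); [exfalso; apply NG; lra|lra]).
        destruct (L_right lam xi Hl Hinj r (y - (phi lam xi (xi r) + lam ^ r)) Hr ltac:(lra)) as [d [Hd H]].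
        set (z := Rmin (xi r + d/2) (c N)).
        assert (z <= xi r + d/2) by apply Rmin_l. assert (z <= c N) by apply Rmin_r.
        assert (xi r < z) by (apply Rmin_glb_lt; lra).
        specialize (H z ltac:(lra)). specialize (Hz z ltac:(lra)). apply Rabs_def2 in H. lra.
      * assert (Hx : forall r, (1 <= r)%nat -> m <> xi r) by (intros r Hr E'; apply Hno; eauto).
        destruct (CC m Hx (y - phi lam xi m) ltac:(lra)) as [d [Hd H]].
        set (z := Rmin (m + d/2) (c N)).
        assert (z <= m + d/2) by apply Rmin_l. assert (z <= c N) by apply Rmin_r.
        assert (m < z) by (apply Rmin_glb_lt; lra).
        specialize (H z ltac:(rewrite Rabs_right; lra)). specialize (Hz z ltac:(lra)).
        apply Rabs_def2 in H. lra.
  - intros r l Hr Hl' Hrl y [A B].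
    apply (cl_interval _ (phi lam xi (xi r)) (phi lam xi (xi r) + lam ^ r)) in A;
      [|intros z [Z1 Z2]; lra].
    apply (cl_interval _ (phi lam xi (xi l)) (phi lam xi (xi l) + lam ^ l)) in B;
      [|intros z [Z1 Z2]; lra].
    assert (xi r <> xi l) by (intros E; apply Hrl; apply Hinj; auto).
    destruct (Rlt_le_dec (xi r) (xi l)).
    + assert (C := L_jump lam xi Hl r (xi l) Hr r0). lra.
    + assert (C := L_jump lam xi Hl l (xi r) Hl' ltac:(lra)). lra.
Qed.

Lemma fiter_add a b f x : fiter (a + b) f x = fiter a f (fiter b f x).
Proof. induction a; simpl; congruence. Qed.

Lemma abs_tri4 y y' z z' e M : Rabs (y - y') < e -> Rabs (z - z') < e ->
  Rabs (y' - z') <= M -> Rabs (y - z) < 2 * e + M.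
Proof. intros. unfold Rabs in *; repeat destruct Rcase_abs; lra. Qed.

Lemma Fset_diam N c f lam i A D :
  (exists b, forall x, inXi c N i x -> f x = lam * x + b) -> 0 <= lam ->
  (forall y z, A y -> A z -> Rabs (y - z) <= D) ->
  forall y z, Fset c N f i A y -> Fset c N f i A z -> Rabs (y - z) <= lam * D.
Proof.
  intros [b Hb] Hl HA y z Hy Hz.
  destruct (Rle_dec (Rabs (y - z)) (lam * D)) as [|Hn]; auto. exfalso.
  set (e := (Rabs (y - z) - lam * D) / 3).
  assert (He : 0 < e) by (unfold e; lra).
  destruct (Hy e He) as [y' [[x1 [A1 [X1 E1]]] Hy']].
  destruct (Hz e He) as [z' [[x2 [A2 [X2 E2]]] Hz']].
  assert (Hyz : Rabs (y' - z') <= lam * D).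
  { subst y' z'. rewrite (Hb x1 X1), (Hb x2 X2).
    replace (lam * x1 + b - (lam * x2 + b)) with (lam * (x1 - x2)) by ring.
    rewrite Rabs_mult, (Rabs_right lam) by lra.
    apply Rmult_le_compat_l; auto. }
  rewrite Rabs_minus_sym in Hy', Hz'.
  assert (T := abs_tri4 y y' z z' e (lam * D) Hy' Hz' Hyz). unfold e in T. lra.
Qed.

Lemma atom_diam N c f lam w : forall A D,
  (forall i, (1 <= i <= N)%nat -> exists b, forall x, inXi c N i x -> f x = lam * x + b) ->
  0 <= lam -> valid_word N w ->
  (forall y z, A y -> A z -> Rabs (y - z) <= D) ->
  forall y z, fold_left (fun (A : R -> Prop) (i : nat) => Fset c N f i A) w A y ->
    fold_left (fun (A : R -> Prop) (i : nat) => Fset c N f i A) w A z ->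
    Rabs (y - z) <= lam ^ (length w) * D.
Proof.
  induction w as [|i w IH]; intros A D Haff Hl Hv HA y z Hy Hz.
  - simpl in *. rewrite Rmult_1_l. auto.
  - simpl in Hy, Hz. unfold valid_word in Hv.
    assert (Hi := Forall_inv Hv). assert (Hw := Forall_inv_tail Hv).
    replace (lam ^ length (i :: w) * D) with (lam ^ length w * (lam * D)) by (simpl; ring).
    apply (IH (Fset c N f i A) (lam * D) Haff Hl Hw); auto.
    apply Fset_diam; auto.
Qed.

Lemma no_repeat N c f lam xi (HN : (2 <= N)%nat) (H1 : P1 c N f lam) (H6 : P6 c N f)
  (Hr : forall r, xi r = fiter r f (xi 0%nat)) (HXt : Xt c N f (xi 0%nat)) :
  forall r l, (r < l)%nat -> xi r = xi l -> False.
Proof.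
  intros r l Hrl E. set (x0 := xi 0%nat) in *.
  assert (Fin : forall k, exists j, (j < l)%nat /\ fiter k f x0 = fiter j f x0).
  { intros k. induction k as [k IH] using (well_founded_induction Wf_nat.lt_wf).
    destruct (Nat.lt_ge_cases k l) as [Hk|Hk]; [exists k; auto|].
    replace k with ((k - l) + l)%nat by lia. rewrite fiter_add, <- Hr, <- E, Hr, <- fiter_add.
    apply IH. lia. }
  destruct (avoid (fun j => fiter j f x0) (c 1%nat) l) as [d [Hd Hav]].
  assert (Hne : forall k, fiter k f x0 <> c 1%nat).
  { intros k Ek. destruct (HXt k) as [_ ND]. apply ND. exists 1%nat. split; [lia|auto]. }
  assert (Hall : forall k, d <= Rabs (fiter k f x0 - c 1%nat)).
  { intros k. destruct (Fin k) as [j [Hj Ej]]. rewrite Ej. apply Hav; auto. }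
  destruct H1 as [_ [Hl Haff]].
  destruct (HXt 0%nat) as [[X0a X0b] _]. simpl in X0a, X0b.
  set (L := c N - c 0%nat).
  destruct (pow_lt_1_zero lam ltac:(rewrite Rabs_right; lra) (d / (L + 1))) as [n0 Hn0].
  { unfold L. apply Rdiv_lt_0_compat; lra. }
  specialize (Hn0 (S n0) ltac:(lia)). rewrite Rabs_right in Hn0 by (apply Rle_ge, pow_le; lra).
  destruct (H6 x0 HXt 1%nat ltac:(lia) (S n0) ltac:(lia)) as [w [Hlen [Hv [Hc1 [[t [Ht _]] _]]]]].
  unfold atom in Hc1, Ht.
  assert (D := atom_diam N c f lam w (inX c N) L Haff ltac:(lra) Hv
    ltac:(intros y z [Y1 Y2] [Z1 Z2]; unfold L; unfold Rabs; destruct Rcase_abs; lra)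
    _ _ Ht Hc1).
  rewrite Hlen in D. specialize (Hall (t + S n0)%nat).
  assert (lam ^ S n0 * L < d); [|lra].
  assert (0 <= L) by (unfold L; lra).
  apply Rle_lt_trans with (lam ^ S n0 * (L + 1)).
  { apply Rmult_le_compat_l; [apply pow_le; lra|lra]. }
  apply Rmult_lt_reg_r with (/ (L + 1)); [apply Rinv_0_lt_compat; lra|].
  replace (lam ^ S n0 * (L + 1) * / (L + 1)) with (lam ^ S n0) by (field; lra).
  exact Hn0.
Qed.

Theorem lemma8 (N : nat) (c : nat -> R) (f : R -> R) (lam : R) (xi : nat -> R)
  (HN : (2 <= N)%nat)
  (Hc : forall i, (i < N)%nat -> c i < c (S i))
  (HfX : forall x, inX c N x -> inX c N (f x))
  (H1 : P1 c N f lam) (H2 : P2 c N f lam) (H3 : P3 c N f)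
  (H4 : P4 c N f lam) (H5 : P5 c N f lam) (H6 : P6 c N f)
  (Hxi : well_cutting c N f lam xi) :
  (forall x y, inX c N x -> inX c N y -> x < y -> phi lam xi x < phi lam xi y) /\
  (forall x, inX c N x -> forall eps, 0 < eps -> exists delta, 0 < delta /\
     forall y, inX c N y -> x - delta < y <= x ->
       Rabs (phi lam xi y - phi lam xi x) < eps) /\
  (forall x, inX c N x -> (forall r, (1 <= r)%nat -> x <> xi r) ->
     forall eps, 0 < eps -> exists delta, 0 < delta /\
     forall y, inX c N y -> Rabs (y - x) < delta ->
       Rabs (phi lam xi y - phi lam xi x) < eps) /\
  (forall r, (1 <= r)%nat -> forall eps, 0 < eps -> exists delta, 0 < delta /\
     forall y, inX c N y -> xi r < y < xi r + delta ->
       Rabs (phi lam xi y - (phi lam xi (xi r) + lam ^ r)) < eps) /\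
  (forall y, (exists x, inX c N x /\ phi lam xi x = y) <->
     (phi lam xi (c 0%nat) <= y <= phi lam xi (c N) /\
      forall r, (1 <= r)%nat -> ~ Gr lam xi r y)) /\
  (forall r l, (1 <= r)%nat -> (1 <= l)%nat -> r <> l ->
     forall y, ~ (cl (Gr lam xi r) y /\ cl (Gr lam xi l) y)).
Proof.
  destruct Hxi as [Hr [_ [HXt _]]].
  apply phi_main.
  - destruct H1 as [_ [Hl _]]; exact Hl.
  - intros r l _ _ E. destruct (Nat.lt_total r l) as [A|[A|A]]; auto; exfalso.
    + exact (no_repeat N c f lam xi HN H1 H6 Hr HXt r l A E).
    + exact (no_repeat N c f lam xi HN H1 H6 Hr HXt l r A (eq_sym E)).
  - destruct (HXt 0%nat) as [[X0a X0b] _]. simpl in X0a, X0b. lra.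
Qed.
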